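(* For every integer $d\ge 1$ there exist $q_0=q_0(d)>\frac{1}{d+1}$ and constants $c_1,c_2>0$ depending only on $d$ such that the following holds. If $G=(V,E)$ is a finite connected simple graph of maximal degree $d$, $p\in(0,1)$ and $q:=1-p\le q_0$, then the stationary distribution $\pi$ of the Bak–Sneppen model on $G$ with parameter $p$ satisfies, for every $k\ge 0$, \[ \pi\big(\eta:\ |\{x\in V:\eta_x=0\}|>k\big)\le c_1e^{-c_2k}. \]
   Context: Let $G=(V,E)$ be a finite connected simple graph (no loops, no multiple edges) and $p\in(0,1)$. The (continuous-time, discrete-valued) Bak–Sneppen model on $G$ with parameter $p$ is the continuous-time Markov process $\eta(t)\in\{0,1\}^V$ defined as follows. Each vertex $x$ carries an independent rate-$1$ Poisson clock. When the clock at $x$ rings: if $\eta_x=0$, or if $\eta_y=1$ for all $y\in V$, then the values $\eta_z$ for all $z$ in the neighbourhood $\{x\}\cup\{y:y\sim x\}$ are replaced by independent Bernoulli$(p)$ random variables (value $1$ with probability $p$, value $0$ with probability $q=1-p$); otherwise nothing happens. This is an irreducible finite Markov chain; $\pi$ is its stationary distribution. *)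

(* Defs.v *)
From HB Require Import structures.
From mathcomp Require Import all_boot all_order all_algebra.
From mathcomp Require Import reals.
From mathcomp Require Import sequences.
From mathcomp.analysis Require Import exp.
Set Implicit Arguments. Unset Strict Implicit. Unset Printing Implicit Defensive.
Import Order.TTheory GRing.Theory Num.Theory.
Local Open Scope ring_scope.

Definition simple_graph (V : finType) (e : rel V) : Prop :=
  symmetric e /\ irreflexive e.

Definition connected_graph (V : finType) (e : rel V) : Prop :=
  forall x y : V, connect e x y.

Definition max_degree (V : finType) (e : rel V) : nat :=
  (\max_(x : V) #|[set y | e x y]|)%N.

Definition cnbhd (V : finType) (e : rel V) (x : V) : {set V} :=
  [set z | (z == x) || e x z].

Definition bs_active (V : finType) (eta : {ffun V -> bool}) (x : V) : bool :=
  ~~ eta x || [forall y, eta y].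

Definition bs_rate (R : realType) (V : finType) (e : rel V) (p : R)
  (eta xi : {ffun V -> bool}) : R :=
  \sum_(x : V)
    if bs_active eta x && [forall z, (z \notin cnbhd e x) ==> (xi z == eta z)]
    then \prod_(z in cnbhd e x) (if xi z then p else 1 - p)
    else 0.

Definition bs_stationary (R : realType) (V : finType) (e : rel V) (p : R)
  (pi : {ffun {ffun V -> bool} -> R}) : Prop :=
  (forall eta, 0 <= pi eta) /\
  \sum_(eta : {ffun V -> bool}) pi eta = 1 /\
  forall xi : {ffun V -> bool},
    \sum_(eta : {ffun V -> bool}) pi eta * bs_rate e p eta xi =
    pi xi * \sum_(eta : {ffun V -> bool}) bs_rate e p xi eta.

(* Main.v *)
Require Import Defs.
From HB Require Import structures.
From mathcomp Require Import all_boot all_order all_algebra.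
From mathcomp Require Import reals.
From mathcomp Require Import sequences.
From mathcomp.analysis Require Import exp.
From mathcomp Require Import ring lra.
Import Order.TTheory GRing.Theory Num.Theory.
Local Open Scope ring_scope.
Set Implicit Arguments. Unset Strict Implicit.


Section Resample.
Variables (R : realType) (V : finType).
Local Notation cfg := {ffun V -> bool}.

Lemma resample (S : {set V}) (eta : cfg) (F : V -> bool -> R) :
  \sum_(xi : cfg) (if [forall z, (z \notin S) ==> (xi z == eta z)]
                   then \prod_(z in S) F z (xi z) else 0)
  = \prod_(z in S) (F z true + F z false).
Proof.
pose K := fun (i : V) (j : bool) => if i \in S then F i j else (j == eta i)%:R.
have := @bigA_distr_bigA R 0 1 *%R +%R V bool K.
have -> : \prod_i \sum_j K i j = \prod_(z in S) (F z true + F z false).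
  rewrite [RHS]big_mkcond; apply: eq_bigr => i _; rewrite big_bool /K.
  by case: (i \in S) => //; case: (eta i); rewrite /= ?addr0 ?add0r.
move=> ->; apply: eq_bigr => xi _.
symmetry; rewrite (bigID (fun i => i \in S)) /=.
have -> : \prod_(i | i \in S) K i (xi i) = \prod_(z in S) F z (xi z).
  by apply: eq_bigr => i iS; rewrite /K iS.
case: forallP => [H|H].
  rewrite [X in _ * X]big1 ?mulr1 // => i /negbTE iS; rewrite /K iS.
  by have := H i; rewrite iS /= => /eqP ->; rewrite eqxx.
have [z Hz] : exists z, ~~ ((z \notin S) ==> (xi z == eta z)).
  by apply/existsP; rewrite -negb_forall; apply/forallP.
move: Hz; rewrite negb_imply => /andP [zS neq].
by rewrite [X in _ * X](bigD1 z) //= /K (negbTE zS) (negbTE neq) mul0r mulr0.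
Qed.
End Resample.

Lemma expR_taylor (R : realType) (t : R) : t <= 1/2 -> expR t <= 1 + t + 2 * t ^+ 2.
Proof.
move=> ht.
have h1 : 1 - t <= expR (- t) by have := expR_ge1Dx (- t); rewrite -/(1 - t).
have hpos : 0 < 1 - t by lra.
have -> : expR t = (expR (- t))^-1 by rewrite expRN invrK.
apply: le_trans (_ : (1 - t)^-1 <= _).
  by rewrite lef_pV2 ?posrE ?expR_gt0.
rewrite -[X in X <= _]div1r ler_pdivrMr //.
have : 0 <= t ^+ 2 * (1 - 2 * t) by rewrite mulr_ge0 ?sqr_ge0 //; lra.
move=> h; rewrite expr2 in h *; nra.
Qed.

Lemma hcond (R : realFieldType) (D q k : R) : 2 <= D -> 0 < q ->
  q <= D^-1 + (D - 1) * D^-1 ^+ 2 * D^-1 ^+ 2 / 2 -> 0 <= k <= D - 1 ->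
  2 * D * (q * (k + 1) - 1) - 2 * (q ^+ 2 * k) <= - ((D - 1) * D^-1 ^+ 2).
Proof.
move=> hD hq hq0 hk.
have hDi : D * D^-1 = 1 by rewrite divff // gt_eqF //; lra.
have hi0 : 0 < D^-1 by rewrite invr_gt0; lra.
move: hDi hi0 hq0; have [iD ->] : exists iD : R, D^-1 = iD by exists D^-1.
move=> hDi hi0 hq0.
have hi1 : iD <= 1/2 by nra.
have [dl dldef] : exists dl : R, dl = (D - 1) * iD ^+ 2 by eexists.
rewrite -dldef in hq0 *.
have [q0 q0def] : exists q0 : R, q0 = iD + dl * iD ^+ 2 / 2 by eexists.
rewrite -q0def in hq0.
have hdl0 : 0 <= dl by rewrite dldef mulr_ge0 ?sqr_ge0 //; lra.
have hdl1 : dl <= iD.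
  rewrite dldef expr2; have : (D - 1) * iD <= 1 by nra. nra.
have hq01 : q0 <= 1.
  rewrite q0def; have : dl * iD ^+ 2 <= 1 * 1.
    by apply: ler_pM; rewrite ?sqr_ge0 //; [lra | rewrite expr2; nra].
  lra.
have s1 : 2 * D * (q * (k + 1) - 1) - 2 * (q ^+ 2 * k)
          <= 2 * D * (q * D - 1) - 2 * (q ^+ 2 * (D - 1)).
  have : 0 <= (D - 1 - k) * (2 * q * (D - q)).
    rewrite mulr_ge0 //; first lra. rewrite mulr_ge0 //; lra.
  rewrite expr2; nra.
have s2 : 2 * D * (q * D - 1) - 2 * (q ^+ 2 * (D - 1))
          <= 2 * D * (q0 * D - 1) - 2 * (q0 ^+ 2 * (D - 1)).
  have : 0 <= (q0 - q) * (2 * D * D - 2 * (D - 1) * (q0 + q)).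
    rewrite mulr_ge0 //; first lra. nra.
  rewrite !expr2; nra.
have s3a : 2 * D * (q0 * D - 1) = dl.
  have -> : q0 * D = D * iD + dl * iD * (D * iD) / 2. rewrite q0def; ring.
  rewrite hDi.
  have -> : 2 * D * (1 + dl * iD * 1 / 2 - 1) = dl * (D * iD) by field.
  by rewrite hDi mulr1.
have s3b : 2 * dl <= 2 * (q0 ^+ 2 * (D - 1)).
  have h0 : 0 <= dl * iD ^+ 2 by rewrite mulr_ge0 ?sqr_ge0.
  have h1 : iD <= q0 by rewrite q0def; lra.
  have h2 : iD ^+ 2 <= q0 ^+ 2 by rewrite ler_sqr ?nnegrE; lra.
  rewrite dldef ler_pM2l // mulrC ler_wpM2r //; lra.
lra.
Qed.

Section BS.
Variables (R : realType) (V : finType) (e : rel V) (p : R) (d : nat).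
Hypotheses (esym : symmetric e) (eirr : irreflexive e).
Hypotheses (hp0 : 0 < p) (hp1 : p < 1).
Hypothesis hdeg : forall x, (#|[set y | e x y]| <= d)%N.
Local Notation cfg := {ffun V -> bool}.
Local Notation q := (1 - p).
Local Notation S x := (cnbhd e x).

Definition w (b : bool) : R := if b then p else 1 - p.
Definition agree (x : V) (eta xi : cfg) : bool :=
  [forall z, (z \notin S x) ==> (xi z == eta z)].
Definition A x eta xi : R :=
  if agree x eta xi then \prod_(z in S x) w (xi z) else 0.
Definition b (eta : cfg) (z : V) : R := (~~ eta z)%:R.

Lemma rateE eta xi :
  bs_rate e p eta xi = \sum_x if bs_active eta x then A x eta xi else 0.
Proof. by apply: eq_bigr => x _; rewrite /A /agree; case: bs_active. Qed.

Lemma w_ge0 c : 0 <= w c.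
Proof. rewrite /w; have ? := hp0; have ? := hp1; case: c; lra. Qed.

Lemma A_ge0 x eta xi : 0 <= A x eta xi.
Proof. rewrite /A; case: agree => //; apply: prodr_ge0 => z _; exact: w_ge0. Qed.

Lemma A_agree x eta xi z : A x eta xi != 0 -> z \notin S x -> xi z = eta z.
Proof.
rewrite /A /agree; case: forallP => [H _ zS|]; last by rewrite eqxx.
by have := H z; rewrite zS => /eqP.
Qed.

Lemma b01 eta z : b eta z * b eta z = b eta z.
Proof. by rewrite /b; case: (eta z); rewrite /= ?mulr0 ?mulr1. Qed.

Lemma b_ge0 eta z : 0 <= b eta z.
Proof. by rewrite /b; case: (eta z). Qed.

Lemma b_le1 eta z : b eta z <= 1.
Proof. by rewrite /b; case: (eta z). Qed.

Lemma prod_sub (T U : {set V}) (h : V -> R) : T \subset U ->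
  \prod_(z in U) (if z \in T then h z else 1) = \prod_(z in T) h z.
Proof.
move=> TU; rewrite -big_mkcondr; apply: eq_bigl => z.
by case zT: (z \in T); rewrite ?andbT ?andbF // (subsetP TU).
Qed.

Lemma A_prod x eta (T : {set V}) : T \subset S x ->
  \sum_xi A x eta xi * \prod_(z in T) b xi z = q ^+ #|T|.
Proof.
move=> TS.
pose F := fun z (c : bool) => w c * (if z \in T then (~~ c)%:R else 1).
have := resample (S x) eta F; rewrite -/(agree x eta _).
have -> : \prod_(z in S x) (F z true + F z false) = q ^+ #|T|.
  rewrite -prodr_const -(prod_sub (fun _ => q) TS); apply: eq_bigr => z _.
  by rewrite /F /w; case: (z \in T); rewrite /= ?mulr0 ?mulr1 ?add0r //; have ? := hp0; lra.
move=> <-; apply: eq_bigr => xi _; rewrite /A.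
rewrite /agree; case: forallP => _; last by rewrite mul0r.
by rewrite /F big_split /= -(prod_sub _ TS).
Qed.

Lemma A_sum1 x eta : \sum_xi A x eta xi = 1.
Proof.
have := @A_prod x eta set0 (sub0set _); rewrite cards0 expr0 => <-.
by apply: eq_bigr => xi _; rewrite big_set0 mulr1.
Qed.

Lemma A_b1 x eta y : y \in S x -> \sum_xi A x eta xi * b xi y = q.
Proof.
move=> yS; have : [set y] \subset S x by rewrite sub1set.
move/(@A_prod x eta _); rewrite cards1 expr1 => <-.
by apply: eq_bigr => xi _; rewrite big_set1.
Qed.

Lemma A_b2 x eta y y' : y \in S x -> y' \in S x -> y != y' ->
  \sum_xi A x eta xi * (b xi y * b xi y') = q ^+ 2.
Proof.
move=> yS y'S yy; have : [set y; y'] \subset S x.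
  by apply/subsetP => z; rewrite !inE; case/orP => /eqP ->; [move: yS | move: y'S]; rewrite inE.
move/(@A_prod x eta _); rewrite cards2 yy => <-.
apply: eq_bigr => xi _; rewrite big_setU1 ?big_set1 //.
by rewrite inE.
Qed.


Definition nz (eta : cfg) := \sum_z b eta z.
Definition deg u : R := \sum_v (e u v)%:R.
Definition dz (eta : cfg) u := \sum_v (e u v)%:R * b eta v.
Definition e2 (eta : cfg) := \sum_u b eta u * dz eta u.

Lemma sum_ind (P : pred V) (F : V -> R) :
  \sum_u (P u)%:R * F u = \sum_(u | P u) F u.
Proof.
rewrite [RHS]big_mkcond; apply: eq_bigr => u _.
by case: (P u); rewrite ?mul1r ?mul0r.
Qed.

Lemma card_sum (A : {set V}) : #|A|%:R = \sum_u (u \in A)%:R :> R.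
Proof.
rewrite -sum1_card natr_sum -(sum_ind (fun u => u \in A)); apply: eq_bigr => u _.
by rewrite mulr1.
Qed.

Lemma nzE (eta : cfg) : #|[set x | ~~ eta x]|%:R = nz eta.
Proof. by rewrite card_sum; apply: eq_bigr => z _; rewrite inE. Qed.

Lemma degE u : deg u = #|[set v | e u v]|%:R.
Proof. by rewrite card_sum; apply: eq_bigr => z _; rewrite inE. Qed.

Lemma deg_le u : deg u <= d%:R.
Proof. by rewrite degE ler_nat. Qed.

Lemma deg_ge0 u : 0 <= deg u.
Proof. by rewrite degE. Qed.

Lemma SE x : S x = x |: [set y | e x y].
Proof. by apply/setP => z; rewrite !inE. Qed.

Lemma card_S x : #|S x|%:R = deg x + 1.
Proof.
by rewrite SE cardsU1 inE eirr /= degE natrD addrC.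
Qed.

Lemma card_S_le x : #|S x|%:R <= (d.+1)%:R :> R.
Proof. by rewrite card_S -natr1 lerD2r deg_le. Qed.

Lemma sumS x (F : V -> R) :
  \sum_(z in S x) F z = F x + \sum_v (e x v)%:R * F v.
Proof.
rewrite SE big_setU1 ?inE ?eirr //; congr (_ + _).
by rewrite sum_ind; apply: eq_bigl => v; rewrite inE.
Qed.

Lemma nz_ge0 eta : 0 <= nz eta.
Proof. by apply: sumr_ge0 => z _; apply: b_ge0. Qed.

Lemma dz_ge0 eta u : 0 <= dz eta u.
Proof. by apply: sumr_ge0 => z _; apply: mulr_ge0 => //; apply: b_ge0. Qed.

Lemma dz_le eta u : dz eta u <= d%:R.
Proof.
apply: le_trans (deg_le u); apply: ler_sum => v _.
by rewrite -[X in _ <= X]mulr1 ler_wpM2l ?b_le1.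
Qed.

Lemma e2_ge0 eta : 0 <= e2 eta.
Proof. by apply: sumr_ge0 => z _; apply: mulr_ge0; [apply: b_ge0|apply: dz_ge0]. Qed.

Lemma e2_le eta : e2 eta <= d%:R * nz eta.
Proof.
rewrite /nz mulr_sumr; apply: ler_sum => u _.
by rewrite mulrC ler_wpM2r ?b_ge0 ?dz_le.
Qed.

Lemma e2E eta : e2 eta = \sum_u \sum_v (e u v)%:R * (b eta u * b eta v).
Proof.
apply: eq_bigr => u _; rewrite /dz mulr_sumr; apply: eq_bigr => v _.
by rewrite mulrCA mulrA.
Qed.

Lemma numA (E ix iy su sv : bool) (P Q : R) : 0 <= P <= 1 -> 0 <= Q <= 1 ->
  (ix -> su) -> (iy -> sv) -> (~~ su -> ~~ sv -> P = Q) -> (ix -> iy -> ~~ E) ->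
  (ix%:R + iy%:R) * (E%:R * P) - (su%:R + sv%:R) * (E%:R * Q) <= E%:R * (P - Q)
  /\ `|E%:R * (P - Q)| <= (su%:R + sv%:R) * E%:R.
Proof.
move=> hP hQ; case: E => H1 H2 H3 H4; last first.
  by rewrite !mul0r !mulr0 subrr; split => //; rewrite normr_le0.
rewrite !mul1r mulr1.
case: ix H1 H4 => [/(_ isT) su1|_] H4; case: iy H2 H4 => [/(_ isT) sv1|_] H4.
- by have := H4 isT isT.
- rewrite su1; split; rewrite /= ?ler_norml; case: sv {H3} => /=; lra.
- rewrite sv1; split; rewrite /= ?ler_norml; case: su {H3} => /=; lra.
case: su H3 => [_|]; first by split; rewrite /= ?ler_norml; case: sv => /=; lra.
case: sv => [_|/(_ isT isT) ->]; first by split; rewrite /= ?ler_norml; lra.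
by rewrite /=; split; rewrite ?ler_norml; lra.
Qed.

Lemma term_bounds x (eta xi : cfg) u v : (forall z, z \notin S x -> xi z = eta z) ->
  ((u == x)%:R + (v == x)%:R) * ((e u v)%:R * (b xi u * b xi v))
   - ((u \in S x)%:R + (v \in S x)%:R) * ((e u v)%:R * (b eta u * b eta v))
   <= (e u v)%:R * (b xi u * b xi v - b eta u * b eta v)
  /\ `|(e u v)%:R * (b xi u * b xi v - b eta u * b eta v)|
     <= ((u \in S x)%:R + (v \in S x)%:R) * (e u v)%:R.
Proof.
move=> H; have bb c z : 0 <= b c z <= 1 by rewrite b_ge0 b_le1.
apply: numA.
- by rewrite mulr_ge0 ?b_ge0 //= -[1]mulr1 ler_pM ?b_ge0 ?b_le1.
- by rewrite mulr_ge0 ?b_ge0 //= -[1]mulr1 ler_pM ?b_ge0 ?b_le1.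
- by move/eqP ->; rewrite inE eqxx.
- by move/eqP ->; rewrite inE eqxx.
- by move=> /H hu /H hv; rewrite /b hu hv.
- by move=> /eqP -> /eqP ->; rewrite eirr.
Qed.


Lemma dsym (c : V -> R) (W : V -> V -> R) : (forall u v, W u v = W v u) ->
  \sum_u \sum_v (c u + c v) * W u v = 2 * \sum_u c u * \sum_v W u v.
Proof.
move=> Ws.
have -> : \sum_u \sum_v (c u + c v) * W u v =
   \sum_u \sum_v c u * W u v + \sum_u \sum_v c v * W u v.
  by rewrite -big_split; apply: eq_bigr => u _; rewrite -big_split;
     apply: eq_bigr => v _; rewrite mulrDl.
rewrite [X in _ + X]exchange_big /= mulr2n mulrDl mul1r; congr (_ + _).
  by apply: eq_bigr => u _; rewrite mulr_sumr.
by apply: eq_bigr => u _; rewrite mulr_sumr; apply: eq_bigr => v _; rewrite Ws.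
Qed.

Section Local.
Variables (x : V) (eta xi : cfg).
Hypothesis H : forall z, z \notin S x -> xi z = eta z.

Lemma nzD : nz xi - nz eta = \sum_(z in S x) (b xi z - b eta z).
Proof.
rewrite /nz -sumrB (bigID (fun z => z \in S x)) /=.
by rewrite [X in _ + X]big1 ?addr0 // => z zS; rewrite /b (H zS) subrr.
Qed.

Lemma nzD_abs : `|nz xi - nz eta| <= (d.+1)%:R.
Proof.
rewrite nzD; apply: le_trans (ler_norm_sum _ _ _) _.
apply: le_trans (card_S_le x).
rewrite -sumr_const; apply: ler_sum => z _.
by rewrite /b; case: (xi z); case: (eta z); rewrite /= ?subrr ?normr0 ?subr0 ?sub0r ?normrN ?normr1.
Qed.

Lemma e2D : e2 xi - e2 eta =
  \sum_u \sum_v (e u v)%:R * (b xi u * b xi v - b eta u * b eta v).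
Proof.
rewrite !e2E -sumrB; apply: eq_bigr => u _; rewrite -sumrB.
by apply: eq_bigr => v _; rewrite mulrBr.
Qed.

Lemma L2 (c : cfg) : \sum_u \sum_v ((u \in S x)%:R + (v \in S x)%:R)
      * ((e u v)%:R * (b c u * b c v)) = 2 * \sum_(u in S x) b c u * dz c u.
Proof.
rewrite dsym; last by move=> u v; rewrite esym (mulrC (b c u)).
congr (_ * _); rewrite sum_ind; apply: eq_bigr => u _.
by rewrite /dz mulr_sumr; apply: eq_bigr => v _; rewrite mulrCA.
Qed.

Lemma e2D_lb : 2 * (b xi x * dz xi x) - 2 * \sum_(u in S x) b eta u * dz eta u
   <= e2 xi - e2 eta.
Proof.
rewrite e2D -(L2 eta).
have -> : 2 * (b xi x * dz xi x) = \sum_u \sum_v ((u == x)%:R + (v == x)%:R)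
      * ((e u v)%:R * (b xi u * b xi v)).
  rewrite dsym; last by move=> u v; rewrite esym (mulrC (b xi u)).
  congr (_ * _); rewrite sum_ind big_pred1_eq.
  by rewrite /dz mulr_sumr; apply: eq_bigr => v _; rewrite mulrCA.
rewrite -sumrB; apply: ler_sum => u _; rewrite -sumrB; apply: ler_sum => v _.
exact: (term_bounds u v H).1.
Qed.

Lemma e2D_abs : `|e2 xi - e2 eta| <= 2 * ((d.+1)%:R * d%:R).
Proof.
rewrite e2D; apply: le_trans (ler_norm_sum _ _ _) _.
apply: le_trans (_ : \sum_u \sum_v ((u \in S x)%:R + (v \in S x)%:R) * (e u v)%:R <= _).
  apply: ler_sum => u _; apply: le_trans (ler_norm_sum _ _ _) _.
  by apply: ler_sum => v _; exact: (term_bounds u v H).2.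
rewrite dsym; last by move=> u v; rewrite esym.
rewrite ler_pM2l // sum_ind; apply: le_trans (_ : \sum_(u in S x) d%:R <= _).
  by apply: ler_sum => u _; apply: deg_le.
rewrite (_ : \sum_(u in S x) (d%:R : R) = #|S x|%:R * d%:R); last first.
  by rewrite sumr_const mulr_natl.
by rewrite ler_wpM2r // card_S_le.
Qed.

End Local.


Definition Dr : R := (d.+1)%:R.
Definition NN : R := 2 * Dr.
Definition Psi (eta : cfg) := NN * nz eta - e2 eta.
Definition MM : R := NN * Dr + 2 * (Dr * d%:R).

Lemma Psi_ge (eta : cfg) : nz eta <= Psi eta.
Proof.
rewrite /Psi /NN /Dr; have := e2_le eta; have := nz_ge0 eta.
rewrite -natr1; have : 0 <= d%:R :> R by []. nra.
Qed.

Lemma Psi_ge0 (eta : cfg) : 0 <= Psi eta.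
Proof. exact: le_trans (nz_ge0 eta) (Psi_ge eta). Qed.

Lemma Psi_le (eta : cfg) : Psi eta <= NN * nz eta.
Proof. by rewrite /Psi lerBlDr lerDl e2_ge0. Qed.

Lemma PsiD_abs x (eta xi : cfg) : (forall z, z \notin S x -> xi z = eta z) ->
  `|Psi xi - Psi eta| <= MM.
Proof.
move=> H; rewrite /Psi /MM.
have -> : NN * nz xi - e2 xi - (NN * nz eta - e2 eta) =
          NN * (nz xi - nz eta) - (e2 xi - e2 eta) by ring.
apply: le_trans (ler_normB _ _) _; apply: lerD; last by rewrite /Dr; exact: (e2D_abs H).
rewrite normrM ger0_norm; last by rewrite /NN /Dr mulr_ge0.
by rewrite ler_wpM2l ?(nzD_abs H) // /NN /Dr mulr_ge0.
Qed.

Lemma Agree x (eta xi : cfg) : A x eta xi != 0 -> forall z, z \notin S x -> xi z = eta z.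
Proof. by move=> h z; apply: A_agree. Qed.

Lemma A_mul_local x (eta : cfg) (F G : cfg -> R) :
  (forall xi : cfg, (forall z, z \notin S x -> xi z = eta z) -> F xi = G xi) ->
  \sum_xi A x eta xi * F xi = \sum_xi A x eta xi * G xi.
Proof.
move=> h; apply: eq_bigr => xi _.
have [->|/Agree /h ->] := eqVneq (A x eta xi) 0; first by rewrite !mul0r.
by [].
Qed.

Lemma A_mul_local_le x (eta : cfg) (F G : cfg -> R) :
  (forall xi : cfg, (forall z, z \notin S x -> xi z = eta z) -> F xi <= G xi) ->
  \sum_xi A x eta xi * F xi <= \sum_xi A x eta xi * G xi.
Proof.
move=> h; apply: ler_sum => xi _.
have [->|/Agree /h le] := eqVneq (A x eta xi) 0; first by rewrite !mul0r.
by rewrite ler_wpM2l ?A_ge0.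
Qed.

Lemma Enz x (eta : cfg) : \sum_xi A x eta xi * (nz xi - nz eta)
   = q * (deg x + 1) - (b eta x + dz eta x).
Proof.
rewrite (A_mul_local (G := fun xi => \sum_(z in S x) (b xi z - b eta z)));
  last by move=> xi; apply: nzD.
under eq_bigr do rewrite mulr_sumr.
rewrite exchange_big /=.
under eq_bigr => z zS.
  rewrite (eq_bigr (fun xi => A x eta xi * b xi z - A x eta xi * b eta z));
    last by move=> xi _; rewrite mulrBr.
  rewrite sumrB -mulr_suml A_sum1 mul1r (@A_b1 x eta z zS).
over.
rewrite sumrB sumr_const sumS -mulr_natl card_S mulrC.
by rewrite /dz.
Qed.


Definition KK x (eta : cfg) := \sum_(u in S x) b eta u * dz eta u.

Lemma Ee2 x (eta : cfg) :
  2 * (q ^+ 2 * deg x) - 2 * KK x eta <= \sum_xi A x eta xi * (e2 xi - e2 eta).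
Proof.
have h1 : \sum_xi A x eta xi * (b xi x * dz xi x) = q ^+ 2 * deg x.
  under eq_bigr => xi _ do rewrite /dz mulr_sumr mulr_sumr.
  rewrite exchange_big /= /deg mulr_sumr; apply: eq_bigr => v _.
  case exv: (e x v); last first.
    by rewrite mulr0 big1 // => xi _; rewrite mul0r !mulr0.
  have xv : x != v by apply/eqP => xv; move: exv; rewrite -xv eirr.
  rewrite mulr1 -(@A_b2 x eta x v) ?inE ?eqxx ?exv ?orbT //.
  by apply: eq_bigr => xi _; rewrite mul1r.
have h2 : \sum_xi A x eta xi * (2 * (b xi x * dz xi x) - 2 * KK x eta)
     = 2 * (q ^+ 2 * deg x) - 2 * KK x eta.
  rewrite [LHS](eq_bigr (fun xi => 2 * (A x eta xi * (b xi x * dz xi x))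
                 - A x eta xi * (2 * KK x eta))); last by move=> xi _; ring.
  by rewrite sumrB -mulr_suml A_sum1 mul1r -mulr_sumr h1.
rewrite -h2; apply: A_mul_local_le => xi H.
exact: e2D_lb H.
Qed.

Lemma EPsi x (eta : cfg) : \sum_xi A x eta xi * (Psi xi - Psi eta)
   <= NN * (q * (deg x + 1) - (b eta x + dz eta x)) - 2 * (q ^+ 2 * deg x)
      + 2 * KK x eta.
Proof.
have -> : \sum_xi A x eta xi * (Psi xi - Psi eta) =
   NN * \sum_xi A x eta xi * (nz xi - nz eta)
   - \sum_xi A x eta xi * (e2 xi - e2 eta).
  rewrite mulr_sumr -sumrB; apply: eq_bigr => xi _; rewrite /Psi; ring.
rewrite Enz; have := Ee2 x eta; lra.
Qed.


Lemma inS_sym u x : (u \in S x) = (x \in S u).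
Proof. by rewrite !inE eq_sym esym. Qed.

Lemma KK_sum (eta : cfg) : \sum_x b eta x * KK x eta <= Dr * e2 eta.
Proof.
have -> : \sum_x b eta x * KK x eta =
    \sum_u (b eta u * dz eta u) * \sum_x (u \in S x)%:R * b eta x.
  rewrite /KK.
  under eq_bigr => x _ do rewrite -(sum_ind (fun u => u \in S x)) mulr_sumr.
  rewrite [LHS]exchange_big /=; apply: eq_big => // u _.
  by rewrite [RHS]mulr_sumr; apply: eq_big => // x _; ring.
rewrite /e2 mulr_sumr; apply: ler_sum => u _; rewrite mulrC.
apply: ler_wpM2r; first by rewrite mulr_ge0 ?b_ge0 ?dz_ge0.
apply: le_trans (_ : \sum_x (x \in S u)%:R <= _).
  apply: ler_sum => x _; rewrite inS_sym.
  by rewrite -[X in _ <= X]mulr1 ler_wpM2l // b_le1.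
by rewrite -card_sum card_S_le.
Qed.

Lemma b_cases (eta : cfg) x : b eta x = 0 \/ b eta x = 1.
Proof. by rewrite /b; case: (eta x); [left|right]. Qed.

Variable delta : R.
Hypothesis hdelta : forall k : R, 0 <= k <= d%:R ->
  NN * (q * (k + 1) - 1) - 2 * (q ^+ 2 * k) <= - delta.

Lemma drift (eta : cfg) :
  \sum_x b eta x * \sum_xi A x eta xi * (Psi xi - Psi eta) <= - delta * nz eta.
Proof.
apply: le_trans (_ : \sum_x b eta x * (NN * (q * (deg x + 1) - (b eta x + dz eta x))
    - 2 * (q ^+ 2 * deg x) + 2 * KK x eta) <= _).
  by apply: ler_sum => x _; rewrite ler_wpM2l ?b_ge0 ?EPsi.
have -> : \sum_x b eta x * (NN * (q * (deg x + 1) - (b eta x + dz eta x))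
    - 2 * (q ^+ 2 * deg x) + 2 * KK x eta) =
   \sum_x b eta x * (NN * (q * (deg x + 1) - 1) - 2 * (q ^+ 2 * deg x))
   - NN * e2 eta + 2 * \sum_x b eta x * KK x eta.
  rewrite /e2 !mulr_sumr -sumrB -big_split; apply: eq_bigr => x _.
  by rewrite /=; case: (b_cases eta x) => ->; ring.
have h1 : \sum_x b eta x * (NN * (q * (deg x + 1) - 1) - 2 * (q ^+ 2 * deg x))
   <= - delta * nz eta.
  rewrite /nz mulr_sumr; apply: ler_sum => x _; rewrite mulrC.
  by apply: ler_wpM2r; rewrite ?b_ge0 // hdelta // deg_ge0 deg_le.
have := KK_sum eta; have := e2_ge0 eta; rewrite /NN; lra.
Qed.


Variable theta : R.
Hypothesis htheta0 : 0 <= theta.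
Hypothesis hthetaM : theta * MM <= 1/2.
Hypothesis hthetaD : 2 * (theta * MM) ^+ 2 <= theta * delta / 2.

Definition f (eta : cfg) := expR (theta * Psi eta).
Definition GG := expR (theta * (NN * Dr)).
Definition g (eta : cfg) := if [forall y, eta y] then GG else f eta.

Lemma f_ge1 eta : 1 <= f eta.
Proof.
apply: le_trans (expR_ge1Dx _); rewrite lerDl mulr_ge0 //; exact: Psi_ge0.
Qed.

Lemma NN_ge0 : 0 <= NN. Proof. by rewrite /NN /Dr mulr_ge0. Qed.
Lemma Dr_ge0 : 0 <= Dr. Proof. by rewrite /Dr. Qed.

Lemma GG_ge1 : 1 <= GG.
Proof.
by apply: le_trans (expR_ge1Dx _); rewrite lerDl !mulr_ge0 // ?NN_ge0 ?Dr_ge0.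
Qed.

Lemma g_le eta : g eta <= f eta + (GG - 1).
Proof.
rewrite /g; case: forallP => _.
  by have := f_ge1 eta; lra.
by have := GG_ge1; lra.
Qed.


Lemma f_ge0 eta : 0 <= f eta.
Proof. exact: expR_ge0. Qed.

Lemma Lf_x x (eta : cfg) : \sum_xi A x eta xi * (f xi - f eta)
  <= f eta * (theta * \sum_xi A x eta xi * (Psi xi - Psi eta) + 2 * (theta * MM) ^+ 2).
Proof.
apply: le_trans (A_mul_local_le (G := fun xi => f eta *
   (theta * (Psi xi - Psi eta) + 2 * (theta * MM) ^+ 2)) _) _.
  move=> xi H; have hD := PsiD_abs H.
  set D := Psi xi - Psi eta in hD *.
  have -> : f xi - f eta = f eta * (expR (theta * D) - 1).
    by rewrite /f [RHS]mulrBr mulr1 -expRD; congr (expR _ - _); rewrite /D; ring.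
  rewrite ler_wpM2l ?f_ge0 //.
  have hD1 : theta * D <= theta * MM.
    by rewrite ler_wpM2l //; apply: le_trans (ler_norm _) hD.
  have hD2 : (theta * D) ^+ 2 <= (theta * MM) ^+ 2.
    rewrite !exprMn ler_wpM2l ?sqr_ge0 //.
    rewrite -real_normK ?num_real // -[X in _ <= X]real_normK ?num_real //.
    rewrite ler_sqr ?nnegrE ?normr_ge0 //; apply: le_trans hD _; exact: ler_norm.
  have := expR_taylor (le_trans hD1 hthetaM); lra.
have -> : \sum_xi A x eta xi * (f eta * (theta * (Psi xi - Psi eta) + 2 * (theta * MM) ^+ 2))
   = f eta * (theta * \sum_xi A x eta xi * (Psi xi - Psi eta)
              + 2 * (theta * MM) ^+ 2 * \sum_xi A x eta xi).
  rewrite !mulr_sumr -big_split mulr_sumr; apply: eq_bigr => xi _ /=; ring.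
by rewrite A_sum1 mulr1.
Qed.


Lemma Lg (eta : cfg) : \sum_xi bs_rate e p eta xi * (g xi - g eta)
   <= - nz eta * (theta * delta / 2 * f eta - (GG - 1)).
Proof.
case: (boolP [forall y, eta y]) => hall.
  have -> : nz eta = 0.
    by rewrite /nz big1 // => z _; rewrite /b (forallP hall z).
  rewrite oppr0 mul0r /g hall; apply: sumr_le0 => xi _.
  rewrite rateE mulr_suml; apply: sumr_le0 => x _.
  case: bs_active; last by rewrite mul0r.
  have [->|/Agree H] := eqVneq (A x eta xi) 0; first by rewrite mul0r.
  rewrite mulr_ge0_le0 ?A_ge0 // subr_le0; case: forallP => _ //.
  rewrite /f ler_expR ler_wpM2l //; apply: le_trans (Psi_le xi) _.
  rewrite ler_wpM2l ?NN_ge0 //; apply: le_trans (card_S_le x).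
  rewrite card_sum; apply: ler_sum => z _.
  case zS: (z \in S x); first exact: b_le1.
  by rewrite /b (H z (negbT zS)) (forallP hall z).
have hg : g eta = f eta by rewrite /g (negbTE hall).
have E1 : \sum_xi bs_rate e p eta xi * (g xi - g eta)
   = \sum_x b eta x * \sum_xi A x eta xi * (g xi - f eta).
  under eq_bigr => xi _ do rewrite rateE mulr_suml.
  rewrite exchange_big /=; apply: eq_big => // x _; rewrite mulr_sumr.
  apply: eq_big => // xi _; rewrite /bs_active (negbTE hall) orbF hg /b.
  by case: (eta x); rewrite /= ?mul0r ?mul1r.
rewrite E1.
have E2 : forall x, \sum_xi A x eta xi * (g xi - f eta)
   <= f eta * (theta * \sum_xi A x eta xi * (Psi xi - Psi eta) + 2 * (theta * MM) ^+ 2)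
      + (GG - 1).
  move=> x; apply: le_trans (_ : \sum_xi A x eta xi * (f xi - f eta + (GG - 1)) <= _).
    apply: ler_sum => xi _; rewrite ler_wpM2l ?A_ge0 //; have := g_le xi; lra.
  rewrite (eq_bigr (fun xi => A x eta xi * (f xi - f eta) + A x eta xi * (GG - 1)));
    last by move=> xi _; rewrite mulrDr.
  by rewrite big_split /= -mulr_suml A_sum1 mul1r lerD2r Lf_x.
apply: le_trans (_ : \sum_x b eta x * (f eta * (theta * \sum_xi A x eta xi * (Psi xi - Psi eta)
      + 2 * (theta * MM) ^+ 2) + (GG - 1)) <= _).
  by apply: ler_sum => x _; rewrite ler_wpM2l ?b_ge0 ?E2.
have -> : \sum_x b eta x * (f eta * (theta * \sum_xi A x eta xi * (Psi xi - Psi eta)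
      + 2 * (theta * MM) ^+ 2) + (GG - 1))
   = f eta * theta * (\sum_x b eta x * \sum_xi A x eta xi * (Psi xi - Psi eta))
     + (f eta * (2 * (theta * MM) ^+ 2) + (GG - 1)) * nz eta.
  rewrite /nz !mulr_sumr -big_split; apply: eq_bigr => x _ /=; ring.
have hd := drift eta.
have hf := f_ge0 eta; have hn := nz_ge0 eta.
have h1 : f eta * theta * (\sum_x b eta x * \sum_xi A x eta xi * (Psi xi - Psi eta))
   <= f eta * theta * (- delta * nz eta) by rewrite ler_wpM2l ?mulr_ge0.
have h2 : f eta * (2 * (theta * MM) ^+ 2) * nz eta <= f eta * (theta * delta / 2) * nz eta.
  by rewrite ler_wpM2r // ler_wpM2l.
lra.
Qed.


Lemma gen_zero (pi : {ffun cfg -> R}) (hst : bs_stationary e p pi) (h : cfg -> R) :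
  \sum_eta pi eta * \sum_xi bs_rate e p eta xi * (h xi - h eta) = 0.
Proof.
case: hst => _ [_ bal].
have -> : \sum_eta pi eta * \sum_xi bs_rate e p eta xi * (h xi - h eta) =
   \sum_eta \sum_xi pi eta * bs_rate e p eta xi * h xi
   - \sum_eta pi eta * h eta * \sum_xi bs_rate e p eta xi.
  rewrite -sumrB; apply: eq_bigr => eta _.
  rewrite !mulr_sumr -sumrB; apply: eq_bigr => xi _; ring.
rewrite exchange_big /=.
have -> : \sum_xi \sum_eta pi eta * bs_rate e p eta xi * h xi
   = \sum_xi h xi * (pi xi * \sum_eta bs_rate e p xi eta).
  apply: eq_bigr => xi _; rewrite -bal mulr_sumr; apply: eq_bigr => eta _; ring.
rewrite -sumrB big1 // => xi _; ring.
Qed.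

Lemma pi_ge0 (pi : {ffun cfg -> R}) (hst : bs_stationary e p pi) eta : 0 <= pi eta.
Proof. by case: hst. Qed.

Lemma tail (ht0 : 0 < theta) (hd0 : 0 < delta) (pi : {ffun cfg -> R})
  (hst : bs_stationary e p pi) (k : nat) :
  \sum_(eta : cfg | (k < #|[set x | ~~ eta x]|)%N) pi eta <=
   (2 * ((GG - 1) ^+ 2 / (2 * (theta * delta / 2) * theta)) / (theta * delta / 2))
   * expR (- (theta * k%:R)).
Proof.
set c := theta * delta / 2; set bb := GG - 1.
set K := bb ^+ 2 / (2 * c * theta).
have hc : 0 < c by rewrite /c; apply: divr_gt0 => //; apply: mulr_gt0.
have hb : 0 <= bb by rewrite /bb subr_ge0 GG_ge1.
have hpi := pi_ge0 hst.
have [_ [hsum _]] := hst.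
have H1 : \sum_eta pi eta * (nz eta * (c * f eta - bb)) <= 0.
  have h0 := gen_zero hst g.
  have : \sum_eta pi eta * \sum_xi bs_rate e p eta xi * (g xi - g eta)
     <= \sum_eta pi eta * (- nz eta * (c * f eta - bb)).
    by apply: ler_sum => eta _; rewrite ler_wpM2l // Lg.
  rewrite h0 (eq_bigr (fun eta => - (pi eta * (nz eta * (c * f eta - bb)))));
    last by move=> eta _; ring.
  by rewrite sumrN oppr_ge0.
have H2 : forall eta, c / 2 * (nz eta * f eta) - K <= nz eta * (c * f eta - bb).
  move=> eta; set n := nz eta; set F := f eta.
  have hn : 0 <= n := nz_ge0 eta.
  have hF : 1 + theta * n <= F.
    apply: le_trans (expR_ge1Dx _) _; rewrite /F /f ler_expR ler_wpM2l //; exact: Psi_ge.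
  have h1 : c / 2 * (n * (1 + theta * n)) <= c / 2 * (n * F).
    by rewrite ler_wpM2l ?ler_wpM2l //; apply: divr_ge0 => //; apply: ltW.
  have h2 : 0 <= c * theta / 2 * n ^+ 2 - bb * n + K.
    have -> : c * theta / 2 * n ^+ 2 - bb * n + K = (c * theta * n - bb) ^+ 2 / (2 * c * theta).
      by rewrite /K; field; rewrite !gt_eqF.
    apply: divr_ge0; first exact: sqr_ge0.
    by rewrite !mulr_ge0 // ?invr_ge0 // ltW.
  move: h1 h2; rewrite expr2; nra.
have H3 : c / 2 * \sum_eta pi eta * (nz eta * f eta) <= K.
  have : \sum_eta pi eta * (c / 2 * (nz eta * f eta) - K) <= 0.
    apply: le_trans H1; apply: ler_sum => eta _; rewrite ler_wpM2l //; exact: H2.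
  rewrite (eq_bigr (fun eta => c / 2 * (pi eta * (nz eta * f eta)) - K * pi eta));
    last by move=> eta _; ring.
  by rewrite sumrB -mulr_sumr -mulr_sumr hsum mulr1 subr_le0.
have H4 : \sum_(eta : cfg | (k < #|[set x | ~~ eta x]|)%N) pi eta <=
    \sum_eta pi eta * (nz eta * f eta * expR (- (theta * k%:R))).
  rewrite [X in _ <= X](bigID (fun eta : cfg => (k < #|[set x | ~~ eta x]|)%N)) /=.
  set Y := fun eta => pi eta * (nz eta * f eta * expR (- (theta * k%:R))).
  have hY : forall eta, 0 <= Y eta.
    by move=> eta; rewrite /Y !mulr_ge0 ?nz_ge0 ?f_ge0 ?expR_ge0.
  apply: le_trans (_ : _ <= \sum_(eta : cfg | (k < #|[set x | ~~ eta x]|)%N) Y eta) _; last first.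
    by rewrite lerDl; apply: sumr_ge0 => eta _; apply: hY.
    apply: ler_sum => eta hk; rewrite /Y.
    rewrite -[X in X <= _]mulr1 ler_wpM2l //.
    have hnk : k%:R + 1 <= nz eta.
      by rewrite -nzE natr1 ler_nat.
    have hf : expR (theta * k%:R) <= f eta.
      rewrite /f ler_expR ler_wpM2l //; apply: le_trans _ (Psi_ge eta).
      lra.
    have : 1 <= nz eta * f eta * expR (- (theta * k%:R)).
      have e1 : expR (theta * k%:R) * expR (- (theta * k%:R)) = 1 by rewrite expRxMexpNx_1.
      have hnf : expR (theta * k%:R) <= nz eta * f eta.
        apply: le_trans hf _; rewrite -[X in X <= _]mul1r ler_wpM2r ?f_ge0 //.
        have := ler_nat R 0 k; rewrite /= => hk0. have : (0:R) <= k%:R by []. lra.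
      apply: le_trans (_ : expR (theta * k%:R) * expR (- (theta * k%:R)) <= _).
        by rewrite e1.
      by rewrite ler_wpM2r // expR_ge0.
    by [].
apply: le_trans H4 _.
rewrite (eq_bigr (fun eta => pi eta * (nz eta * f eta) * expR (- (theta * k%:R))));
  last by move=> eta _; ring.
rewrite -mulr_suml ler_wpM2r ?expR_ge0 //.
rewrite -/c -/K.
have hc2 : 0 < c / 2 by apply: divr_gt0.
rewrite (_ : 2 * K / c = K / (c / 2)); last by field; rewrite gt_eqF.
by rewrite ler_pdivlMr // mulrC.
Qed.

End BS.

Unset Implicit Arguments.

Theorem theorem3 (R : realType) (d : nat) (hd : (1 <= d)%N) :
  exists q0 c1 c2 : R,
    1 / (d%:R + 1) < q0 /\ 0 < c1 /\ 0 < c2 /\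
    forall (V : finType) (e : rel V),
      simple_graph e -> connected_graph e -> max_degree e = d ->
      forall p : R, 0 < p < 1 -> 1 - p <= q0 ->
      forall pi : {ffun {ffun V -> bool} -> R},
        bs_stationary e p pi ->
        forall k : nat,
          \sum_(eta : {ffun V -> bool} | (k < #|[set x | ~~ eta x]|)%N) pi eta
            <= c1 * expR (- (c2 * k%:R)).
Proof.
pose D : R := (d.+1)%:R.
have hD2 : 2 <= D by rewrite /D ler_nat ltnS.
have hDd : d%:R = D - 1 by rewrite /D -natr1 addrK.
have hD0 : 0 < D by lra.
have [iD hiD] : exists iD : R, D^-1 = iD by exists D^-1.
have hDi : D * iD = 1 by rewrite -hiD divff // gt_eqF.
have hi0 : 0 < iD by rewrite -hiD invr_gt0.
pose delta := (D - 1) * iD ^+ 2.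
have hdl0 : 0 < delta by rewrite /delta mulr_gt0 ?exprn_gt0 //; lra.
have hdl1 : delta <= 1.
  rewrite /delta expr2.
  have h1 : iD <= 1 by nra.
  have h2 : (D - 1) * iD <= 1 by nra.
  have h3 : (D - 1) * iD * iD <= 1 * 1.
    by apply: ler_pM => //; [rewrite mulr_ge0 //; lra | apply: ltW].
  by rewrite mulrA; lra.
pose q0 := iD + (D - 1) * iD ^+ 2 * iD ^+ 2 / 2.
have hMM : 1 <= MM R d.
  rewrite /MM /NN /Dr -/D.
  have : 0 <= 2 * (D * d%:R) by rewrite mulr_ge0 // mulr_ge0 //; lra.
  nra.
pose theta := delta / (4 * MM R d ^+ 2).
have hM0 : 0 < MM R d by lra.
have ht0 : 0 < theta by rewrite /theta divr_gt0 // mulr_gt0 // exprn_gt0.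
have htM : theta * MM R d <= 1 / 2.
  have -> : theta * MM R d = delta / (4 * MM R d).
    by rewrite /theta; field; rewrite gt_eqF.
  rewrite ler_pdivrMr; last by rewrite mulr_gt0.
  lra.
have htD : 2 * (theta * MM R d) ^+ 2 <= theta * delta / 2.
  rewrite le_eqVlt; apply/orP; left; apply/eqP.
  rewrite /theta; field; rewrite gt_eqF //.
pose c := theta * delta / 2.
have hc : 0 < c by rewrite /c divr_gt0 // mulr_gt0.
have hG : 1 < GG (R:=R) d theta.
  rewrite /GG pexpR_gt1 // mulr_gt0 // mulr_gt0 // /NN /Dr mulr_gt0 //.
exists q0, (2 * ((GG (R:=R) d theta - 1) ^+ 2 / (2 * c * theta)) / c), theta.
split.
  rewrite natr1 -/D div1r hiD /q0 ltrDl.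
  by rewrite divr_gt0 // mulr_gt0 ?exprn_gt0 // mulr_gt0 ?exprn_gt0 //; lra.
split.
  rewrite divr_gt0 // mulr_gt0 // divr_gt0 // ?exprn_gt0 ?subr_gt0 //.
  by rewrite mulr_gt0 // mulr_gt0.
split => //.
move=> V e [esym eirr] _ hmax p /andP [hp0 hp1] hq pi hst k.
have hdeg : forall x : V, (#|[set y | e x y]| <= d)%N.
  move=> x; rewrite -hmax /max_degree.
  first [exact: (leq_bigmax (fun x => #|[set y | e x y]|) x) | exact: le_bigmax | exact: (le_bigmax _ (fun x => #|[set y | e x y]|) x)].
have hdelta : forall k : R, 0 <= k <= d%:R ->
    NN R d * ((1 - p) * (k + 1) - 1) - 2 * ((1 - p) ^+ 2 * k) <= - delta.
  move=> r hr; rewrite /NN /Dr -/D.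
  rewrite /delta -hiD; apply: hcond => //; first lra.
    by rewrite hiD.
  by rewrite -hDd.
exact: (tail esym eirr hp0 hp1 hdeg hdelta (ltW ht0) htM htD ht0 hdl0 hst k).
Qed.
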